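(* Let $f$ be a non-constant rational function with $f(z)\neq 0$ for all $z\in\mathbb{C}$, all of whose poles are multiple. Let $Q[f]$ be the differential polynomial described in the context, of weight $w$. Then, for any $a\in\mathbb{C}$, the function $Q[f](z)-\frac{1}{z+a}$ has at least $w$ distinct zeros in $\mathbb{C}$.
   Context: Fix integers $k\geq 1$ and non-negative integers $p_0,p_1,\ldots,p_k,q_1,\ldots,q_k$ with $p_i\geq q_i$ for $i=1,\ldots,k$ and $q':=\sum_{i=1}^k q_i>0$. For a meromorphic function $f$, set $$Q[f]:=f^{p_0}\,(f^{p_1})^{(q_1)}\,(f^{p_2})^{(q_2)}\cdots(f^{p_k})^{(q_k)},$$ where $(f^{p})^{(q)}$ denotes the $q$-th derivative of $f^p$. With $p':=\sum_{i=1}^k p_i$, the degree of $Q[f]$ is $d:=p_0+p'$ and its weight is $w:=d+q'$. *)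

(* Defs.v *)
(* complex numbers C := R[i] over an arbitrary realType R
   (any realType is isomorphic to the reals, so R[i] is the field of complex numbers). *)
From HB Require Import structures.
From mathcomp Require Import all_boot all_order all_algebra.
From mathcomp Require Import complex.
From mathcomp Require Import reals.
Set Implicit Arguments. Unset Strict Implicit. Unset Printing Implicit Defensive.
Import Order.TTheory GRing.Theory Num.Theory.
Local Open Scope ring_scope.

Section RatFun.
Variable F : fieldType.

(* A rational function is represented by a pair (N, D) of polynomials,
   standing for N / D (with D <> 0). *)
Definition rfun := ({poly F} * {poly F})%type.

Definition rf_mul (g h : rfun) : rfun := (g.1 * h.1, g.2 * h.2).
Definition rf_sub (g h : rfun) : rfun := (g.1 * h.2 - h.1 * g.2, g.2 * h.2).
Definition rf_pow (g : rfun) (n : nat) : rfun := (g.1 ^+ n, g.2 ^+ n).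
Definition rf_deriv (g : rfun) : rfun :=
  (g.1^`() * g.2 - g.1 * g.2^`(), g.2 ^+ 2).
Definition rf_derivn (n : nat) (g : rfun) : rfun := iter n rf_deriv g.

(* z is a zero of the rational function N/D: N/D is holomorphic at z and
   vanishes there, i.e. N/D = N'/D' for some representation with
   D'(z) <> 0 and N'(z) = 0. *)
Definition rf_zero (g : rfun) (z : F) : Prop :=
  exists N' D' : {poly F}, g.1 * D' = N' * g.2 /\ D'.[z] != 0 /\ N'.[z] = 0.

Definition diffQ (k p0 : nat) (p q : 'I_k -> nat) (f : rfun) : rfun :=
  rf_mul (rf_pow f p0)
    (\big[rf_mul/(1, 1)]_(i < k) rf_derivn (q i) (rf_pow f (p i))).
End RatFun.

(* Main.v *)
From HB Require Import structures.
From mathcomp Require Import all_boot all_order all_algebra.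
From mathcomp Require Import complex.
From mathcomp Require Import reals.
From mathcomp Require Import ring zify.
Require Import Defs.
Import Order.TTheory GRing.Theory Num.Theory.
Local Open Scope ring_scope.
Section Rad.
Variable F : numClosedFieldType.
Implicit Types p q g : {poly F}.

Lemma rad_lemma p : p != 0 -> exists S g,
  [/\ uniq S, forall z, root p z = (z \in S),
      p = g * \prod_(x <- S) ('X - x%:P), g %| p^`() &
      forall x, x \in S -> ('X - x%:P) ^+ 2 %| p -> root g x].
Proof.
move: {2}(size p) (leqnn (size p)) => n; elim: n p => [|n IH] p Hs p0.
  by move: Hs; rewrite leqn0 size_poly_eq0 (negbTE p0).
case: (boolP (size p == 1)) => [/size_poly1P [c c0 pc]|].
  exists [::], p; split => //.
  - move=> z; rewrite pc rootC in_nil; exact/negbTE.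
  - by rewrite big_nil mulr1.
  - by rewrite pc derivC dvdp0.
move/closed_rootP => [x rx].
have [m [q /implyP /(_ p0) nqx pq]] := multiplicity_XsubC p x.
have m0 : (0 < m)%N.
  case: m pq => // pq; move: rx; rewrite pq expr0 mulr1 => rx; by rewrite rx in nqx.
have q0 : q != 0 by apply: contra_neq p0 => q0; rewrite pq q0 mul0r.
have sq : (size q <= n)%N.
  move: Hs; rewrite pq size_mul ?size_exp_XsubC //; last by rewrite expf_neq0 // polyXsubC_eq0.
  rewrite addnS /= => H; have : (size q + 1 <= n.+1)%N by apply: leq_trans H; rewrite leq_add2l.
  by rewrite addn1.
have [S1 [g1 [u1 r1 e1 d1 m1]]] := IH q sq q0.
have xS1 : x \notin S1 by rewrite -r1.
exists (x :: S1), (g1 * ('X - x%:P) ^+ m.-1); split.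
- by rewrite /= xS1 u1.
- move=> z; rewrite pq rootM r1 in_cons -(prednK m0) root_exp_XsubC orbC //.
- rewrite big_cons pq e1 -{1}(prednK m0) exprS; ring.
- case/dvdpP: d1 => h1 eh1.
  rewrite pq derivM eh1 e1 deriv_exp derivXsubC mul1r -{2 3}(prednK m0) exprS /=.
  rewrite -mulr_natr.
  apply/dvdpP; exists (h1 * ('X - x%:P) + \prod_(x0 <- S1) ('X - x0%:P) * m%:R); ring.
- move=> z; rewrite in_cons => /orP [/eqP -> | zS1] dz.
    case: m m0 pq => [//|[|m']] _ pq.
      move: dz; rewrite pq expr1 expr2 dvdp_mul2r ?polyXsubC_eq0 // -root_factor_theorem.
      by rewrite (negbTE nqx).
    by rewrite rootM /= root_exp_XsubC eqxx orbT.
  have zx : z != x by apply: contraNneq xS1 => <-.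
  rewrite rootM; apply/orP; left; apply: m1 => //.
  move: dz; rewrite pq Gauss_dvdpl //.
  apply: coprimep_expl; apply: coprimep_expr.
  by rewrite coprimep_XsubC rootE !hornerE subr_eq0 eq_sym.
Qed.
Lemma ar1 a b a' b' x y : (a' <= a.-1 -> b' <= b.-1 -> x <= (a + b').-1 ->
  y <= (a' + b).-1 -> 0 < a -> 1 < b -> x <= a + b - 2 /\ y <= a + b - 2)%N.
Proof. rewrite -!subn1; lia. Qed.
Lemma ar2 b a u sF sg sgB sB sW : ((sg + sgB).-1 <= sW -> sW <= a + b - 2 ->
  b = sg + sF -> b = sgB + sB -> sB <= u -> 0 < sg -> 0 < sgB -> a < b ->
  b - a + 1 - u <= sF)%N.
Proof. rewrite -!subn1; lia. Qed.

Lemma size_der_le (p : {poly F}) : (size p^`() <= (size p).-1)%N.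
Proof.
have [->|p0] := eqVneq p 0; first by rewrite deriv0 size_poly0.
by rewrite -ltnS (ltn_predK (lt_size_deriv p0)); exact: lt_size_deriv.
Qed.

Lemma size_rad (g : {poly F}) S : g != 0 ->
  size (g * \prod_(x <- S) ('X - x%:P)) = (size g + size S)%N.
Proof.
move=> g0; rewrite size_mul // ?size_prod_XsubC ?addnS //.
by rewrite -size_poly_eq0 size_prod_XsubC.
Qed.

Lemma core (A B : {poly F}) (U : seq F) : uniq U ->
  (forall z, root B z -> z \in U) -> (forall z, root B z -> A.[z] != 0) ->
  (size A < size B)%N -> (1 < size B)%N ->
  exists S, [/\ uniq S, forall z, z \in S -> root (B - A) z && ~~ root B z &
     (size B - size A + 1 - size U <= size S)%N].
Proof.
move=> uU BU AB sAB sB1.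
have B0 : B != 0 by rewrite -size_poly_eq0; case: (size B) sB1.
have sFF : size (B - A) = size B by rewrite size_polyDl // size_polyN.
have FF0 : B - A != 0 by rewrite -size_poly_eq0 sFF -lt0n (ltn_trans _ sB1).
have [z0 rz0] : exists z, root B z by apply/closed_rootP; rewrite neq_ltn sB1 orbT.
have A0 : A != 0 by apply: contraTneq (AB _ rz0) => ->; rewrite horner0 eqxx.
have [SF [g [uF rF eF dF _]]] := @rad_lemma _ FF0.
have [SB [gB [uB rB eB dB _]]] := @rad_lemma _ B0.
exists SF; split => //.
  move=> z zS; rewrite rF zS /=; apply/negP => rBz.
  have := AB z rBz; move: (rBz); rewrite /root => /eqP Bz.
  by move: zS; rewrite -rF /root hornerD hornerN Bz sub0r oppr_eq0 => ->.
have g0 : g != 0 by apply: contra_neq FF0 => h0; rewrite eF h0 mul0r.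
have gB0 : gB != 0 by apply: contra_neq B0 => h0; rewrite eB h0 mul0r.
pose W := A * B^`() - A^`() * B.
have gW : g %| W.
  have -> : W = (B - A)^`() * B - (B - A) * B^`() by rewrite /W derivB; ring.
  apply: dvdp_sub; first exact: dvdp_mulr.
  by apply: dvdp_mulr; rewrite eF; apply: dvdp_mulr.
have gBW : gB %| W.
  apply: dvdp_sub; first exact: dvdp_mull.
  by apply: dvdp_mull; rewrite eB; apply: dvdp_mulr.
have cop : coprimep g gB.
  apply: Pdiv.ClosedField.root_coprimep => x rgx; apply/negP => /eqP rgBx.
  have rFx : root (B - A) x by apply: root_dvdp rgx; rewrite eF; apply: dvdp_mulr.
  have rBx : root B x by apply: root_dvdp (introT eqP rgBx); rewrite eB; apply: dvdp_mulr.
  have := AB x rBx; move: rFx rBx; rewrite /root hornerD hornerN => /eqP + /eqP Bx.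
  by rewrite Bx sub0r => /eqP; rewrite oppr_eq0 => ->.
have hW : g * gB %| W by rewrite Gauss_dvdp // gW gBW.
have W0 : W != 0.
  have [m [B2 /implyP /(_ B0) nB2 eB2]] := multiplicity_XsubC B z0.
  have m0 : (0 < m)%N.
    case: m eB2 => // eB2; move: rz0; rewrite eB2 expr0 mulr1 => r; by rewrite r in nB2.
  pose V := A * B2^`() * ('X - z0%:P) + A * B2 * m%:R - A^`() * B2 * ('X - z0%:P).
  have -> : W = ('X - z0%:P) ^+ m.-1 * V.
    rewrite /W /V eB2 derivM deriv_exp derivXsubC mul1r -mulr_natr.
    rewrite -{1 3 4}(prednK m0) exprS (prednK m0); ring.
  rewrite mulf_neq0 ?expf_neq0 ?polyXsubC_eq0 //.
  apply/negP => /eqP V0; have : V.[z0] = 0 by rewrite V0 horner0.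
  rewrite /V !hornerE subrr !mulr0 add0r subr0 => /eqP.
  rewrite !mulf_eq0 -polyC_natr hornerC pnatr_eq0 (negbTE (AB _ rz0)) (gtn_eqF m0) orbF /=.
  by move: nB2; rewrite /root => /negbTE ->.
have sW : (size (g * gB)%R <= size W)%N by apply: dvdp_leq.
rewrite size_mul // in sW.
have sW2 : (size W <= size A + size B - 2)%N.
  rewrite /W; apply: leq_trans (size_add _ _) _; rewrite size_polyN geq_max.
  have d1 := size_der_le A; have d2 := size_der_le B.
  have m1 := size_mul_leq A B^`(); have m2 := size_mul_leq A^`() B.
  have a1 : (0 < size A)%N by rewrite lt0n size_poly_eq0.
  by have [-> ->] := ar1 _ _ _ _ _ _ d1 d2 m1 m2 a1 sB1.
have e1 : size (B - A) = (size g + size SF)%N by rewrite {1}eF size_rad.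
have e2 : size B = (size gB + size SB)%N by rewrite {1}eB size_rad.
have sBU : (size SB <= size U)%N.
  by apply: uniq_leq_size => // x; rewrite -rB; apply: BU.
have p1 : (0 < size g)%N by rewrite lt0n size_poly_eq0.
have p2 : (0 < size gB)%N by rewrite lt0n size_poly_eq0.
rewrite sFF in e1.
exact: (ar2 _ _ _ _ _ _ _ _ sW sW2 e1 e2 sBU p1 p2 sAB).
Qed.
End Rad.
Set Implicit Arguments. Unset Strict Implicit.
Lemma ar_fin0 d n s : (1 <= d -> 2 * s.+1 <= n -> d + s + 1 <= d * n)%N.
Proof.
move=> h1 h2.
have h3 : (d * (2 * s.+1) <= d * n)%N by rewrite leq_mul2l h2 orbT.
have h4 : (s <= d * s)%N by rewrite leq_pmull.
move: h3 h4; rewrite mulnA (mulnC d 2) -mulnA mulnS.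
move: (d * n)%N (d * s)%N => x y; lia.
Qed.
Lemma ar_fin1 d n s q sA sB : (1 <= d -> 1 <= s -> 2 * s <= n -> sA <= q * s.-1 + 2 ->
  sB = d * n + q * s + 1 -> d + q <= sB - sA + 1 - s)%N.
Proof.
case: s => // s h0 _ /= h1 h2 ->.
have := @ar_fin0 d n s h0 h1; move: h2; rewrite mulnS.
move: (d * n)%N (q * s)%N => x y; lia.
Qed.
Lemma ar_fin2 d n s q sA sB : (1 <= d -> 1 <= s -> 2 * s <= n -> sA <= q * s.-1 + 1 ->
  sB = d * n + q * s -> d + q <= sB - sA + 1 - s)%N.
Proof.
case: s => // s h0 _ /= h1 h2 ->.
have := @ar_fin0 d n s h0 h1; move: h2; rewrite mulnS.
move: (d * n)%N (q * s)%N => x y. lia.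
Qed.

Section Ana.
Variable F : numClosedFieldType.
Implicit Types g h : rfun F.

Definition eqv g h := g.1 * h.2 = h.1 * g.2.

Lemma eqv_trans g h k : h.2 != 0 -> eqv g h -> eqv h k -> eqv g k.
Proof.
rewrite /eqv => h0 e1 e2; apply: (mulIf h0).
by rewrite -mulrA (mulrC k.2) mulrA e1 -mulrA (mulrC g.2) mulrA e2 mulrAC.
Qed.

Lemma eqv_deriv g h : eqv g h -> eqv (rf_deriv g) (rf_deriv h).
Proof.
case: g h => N E [N2 E2]; rewrite /eqv /= => e.
have e' := congr1 (@deriv F) e; rewrite !derivM in e'.
apply/eqP; rewrite -subr_eq0; apply/eqP.
have -> : (N^`() * E - N * E^`()) * E2 ^+ 2 - (N2^`() * E2 - N2 * E2^`()) * E ^+ 2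
  = E * E2 * ((N^`() * E2 + N * E2^`()) - (N2^`() * E + N2 * E^`()))
    + (E^`() * E2 + E * E2^`()) * (N2 * E - N * E2) by ring.
by rewrite e' subrr mulr0 add0r e subrr mulr0.
Qed.

Lemma eqv_mul g1 g2 h1 h2 : eqv g1 h1 -> eqv g2 h2 -> eqv (rf_mul g1 g2) (rf_mul h1 h2).
Proof.
rewrite /eqv /= => e1 e2.
by rewrite mulrACA e1 e2 mulrACA.
Qed.

Lemma eqv_sub g h (Y : {poly F}) : eqv g h -> eqv (rf_sub g (1, Y)) (rf_sub h (1, Y)).
Proof.
rewrite /eqv /= => e.
have -> : (g.1 * Y - 1 * g.2) * (h.2 * Y) = (g.1 * h.2) * Y ^+ 2 - g.2 * h.2 * Y by ring.
rewrite e; ring.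
Qed.

Lemma eqv_big k (G : 'I_k -> rfun F) (H E : 'I_k -> {poly F}) :
  (forall i, eqv (G i) (H i, E i)) ->
  eqv (\big[@rf_mul F/(1, 1)]_(i < k) G i) (\prod_(i < k) H i, \prod_(i < k) E i).
Proof.
move=> e.
apply: (big_rec3 (fun a b c => eqv a (b, c))); first by rewrite /eqv /= mulr1.
move=> i a b c _ ih.
exact: (eqv_mul (e i) ih).
Qed.

Lemma size_Mn (x : {poly F}) n : (size (x *+ n) <= size x)%N.
Proof.
elim: n => [|n ih]; first by rewrite mulr0n size_poly0.
by rewrite mulrS; apply: leq_trans (size_add _ _) _; rewrite geq_max leqnn.
Qed.

Variables (c : F) (D gD : {poly F}) (S : seq F).
Hypothesis c0 : c != 0.
Hypothesis D0 : D != 0.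
Hypothesis uS : uniq S.
Hypothesis rS : forall z, root D z = (z \in S).
Let L := \prod_(x <- S) ('X - x%:P).
Hypothesis eD : D = gD * L.
Variable T : {poly F}.
Hypothesis eT : D^`() = T * gD.

Lemma L0 : L != 0.
Proof. by rewrite -size_poly_eq0 size_prod_XsubC. Qed.

Lemma gD0 : gD != 0.
Proof. by apply: contra_neq D0 => h; rewrite eD h mul0r. Qed.

Lemma TD : T * D = D^`() * L.
Proof. by rewrite eT eD mulrA. Qed.

Lemma keyD p : (D ^+ p)^`() * L = D ^+ p * (T *+ p).
Proof.
case: p => [|p]; first by rewrite expr0 derivC !mulr0n mul0r mulr0.
rewrite deriv_exp /= exprS.
transitivity (D ^+ p *+ p.+1 * (D^`() * L)); first by ring.
rewrite -TD; ring.
Qed.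

Lemma keyL j : (L ^+ j)^`() * L = L ^+ j * (L^`() *+ j).
Proof.
case: j => [|j]; first by rewrite expr0 derivC !mulr0n mul0r mulr0.
rewrite deriv_exp /= exprS; ring.
Qed.

Definition Kf p j := T *+ p + L^`() *+ j.

Lemma keyB p j : (D ^+ p * L ^+ j)^`() * L = (D ^+ p * L ^+ j) * Kf p j.
Proof.
rewrite derivM.
transitivity ((D ^+ p)^`() * L * L ^+ j + D ^+ p * ((L ^+ j)^`() * L)); first by ring.
rewrite keyD keyL /Kf; ring.
Qed.

Fixpoint hs p j := match j with
  | 0 => c%:P ^+ p
  | j'.+1 => (hs p j')^`() * L - hs p j' * Kf p j' end.

Lemma step p j (h : {poly F}) : eqv (rf_deriv (h, D ^+ p * L ^+ j))
  (h^`() * L - h * Kf p j, D ^+ p * L ^+ j.+1).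
Proof.
rewrite /eqv /=; set B := D ^+ p * L ^+ j.
have -> : D ^+ p * L ^+ j.+1 = B * L by rewrite /B exprSr mulrA.
have -> : (h^`() * B - h * B^`()) * (B * L) = h^`() * B * B * L - h * B * (B^`() * L)
  by ring.
rewrite keyB /B; ring.
Qed.

Lemma local z : z \in S -> exists m, [/\ (0 < m)%N, L^`().[z] != 0 &
   T.[z] = L^`().[z] *+ m].
Proof.
move=> zS.
pose L1 := \prod_(x <- S | x != z) ('X - x%:P).
have eL : L = ('X - z%:P) * L1 by rewrite /L (bigD1_seq z).
have L1z : L1.[z] != 0.
  rewrite /L1 horner_prod prodf_seq_neq0; apply/allP => x xS; apply/implyP => xz.
  by rewrite !hornerE subr_eq0 eq_sym.
have dLz : L^`().[z] = L1.[z] by rewrite eL derivM derivXsubC !hornerE subrr; ring.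
have [m [D1 /implyP /(_ D0) nD1 eD1]] := multiplicity_XsubC D z.
case: m eD1 => [|m] eD1.
  by have := rS z; rewrite zS eD1 expr0 mulr1 => r; rewrite r in nD1.
exists m.+1; split => //; first by rewrite dLz.
have e := TD; rewrite eD1 eL derivM deriv_exp derivXsubC mul1r /= in e.
have e2 : T * D1 = (D1^`() * ('X - z%:P) + D1 *+ m.+1) * L1.
  have nz : ('X - z%:P) ^+ m.+1 != 0 by rewrite expf_neq0 // polyXsubC_eq0.
  apply: (mulIf nz).
  rewrite -mulrA e !exprS; ring.
have := congr1 (fun P => P.[z]) e2; rewrite /= !hornerE subrr mulr0 add0r.
rewrite dLz => e3.
apply: (mulIf nD1); rewrite e3 hornerMn; ring.
Qed.


Lemma hs_root p j : (j <= p)%N -> forall z, z \in S -> (hs p j).[z] != 0.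
Proof.
move=> jp z zS; elim: j jp => [|j ih] jp /=.
  by rewrite -rmorphXn hornerC expf_neq0.
have [m [m0 Lz Tz]] := local zS.
have Lz0 : L.[z] = 0 by apply/eqP; move: (root_prod_XsubC S z); rewrite zS.
rewrite hornerD hornerN !hornerM Lz0 mulr0 sub0r oppr_eq0 /Kf hornerD !hornerMn Tz.
rewrite -mulrnA -mulrnDr mulf_neq0 ?ih 1?ltnW //.
rewrite -mulr_natr mulf_neq0 // pnatr_eq0 -lt0n addn_gt0 muln_gt0 m0 /=.
by rewrite (leq_trans _ jp).
Qed.

Lemma size_T : (size T <= size S)%N.
Proof.
have [->|T0] := eqVneq T 0; first by rewrite size_poly0.
have := size_der_le _ D; rewrite eT eD size_rad ?gD0 // size_mul ?gD0 //.
have := gD0; rewrite -size_poly_eq0 => g0.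
rewrite -!subn1; move: g0; move: (size T) (size gD) (size S) => a b s; clear; lia.
Qed.

Lemma size_L : size L = (size S).+1.
Proof. by rewrite size_prod_XsubC. Qed.

Lemma size_K p j : (size (Kf p j) <= size S)%N.
Proof.
rewrite /Kf; apply: leq_trans (size_add _ _) _; rewrite geq_max.
rewrite (leq_trans (size_Mn _ _) size_T) /=.
apply: leq_trans (size_Mn _ _) _; apply: leq_trans (size_der_le _ _) _.
by rewrite size_L.
Qed.

Lemma size_hs p j : (0 < size S)%N -> (size (hs p j) <= j * (size S).-1 + 1)%N.
Proof.
move=> s0; elim: j => [|j ih] /=.
  by rewrite -rmorphXn size_polyC_leq1.
apply: leq_trans (size_add _ _) _; rewrite size_polyN geq_max.
have h1 := size_mul_leq (hs p j)^`() L.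
have h2 := size_mul_leq (hs p j) (Kf p j).
have h3 := size_der_le _ (hs p j).
have h4 := size_K p j.
rewrite size_L in h1.
move: h1 h2 h3 h4 ih s0.
move: (size ((hs p j)^`() * L)%R) (size (hs p j * Kf p j)%R) (size (hs p j)^`())
  (size (Kf p j)) (size (hs p j)) (size S) => a b x y hh [//|s] + + + + + _.
rewrite mulSn /=; move: (j * s)%N => t.
rewrite -!subn1 => *; apply/andP; split; lia.
Qed.

Lemma iter_eqv p j : (j <= p)%N ->
  eqv (rf_derivn j (rf_pow (c%:P, D) p)) (hs p j, D ^+ p * L ^+ j) /\
  (rf_derivn j (rf_pow (c%:P, D) p)).2 != 0.
Proof.
elim: j => [|j ih] jp.
  by rewrite /= /eqv /= expr0 mulr1; split => //; rewrite expf_neq0.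
have [e1 n1] := ih (ltnW jp).
split; last by rewrite /rf_derivn iterS /= expf_neq0.
rewrite /rf_derivn iterS -/(rf_derivn j _).
apply: (eqv_trans _ (eqv_deriv e1)).
  by rewrite /= expf_neq0 // mulf_neq0 ?expf_neq0 ?L0.
exact: step.
Qed.


Lemma main_sec k p0 (p q : 'I_k -> nat) (a : F) :
  (forall i, q i <= p i)%N -> (0 < \sum_(i < k) q i)%N ->
  (0 < size S)%N -> (2 * size S <= (size D).-1)%N ->
  (forall z, root D z -> ('X - z%:P) ^+ 2 %| D) ->
  exists S' : seq F,
    [/\ uniq S',
        (p0 + \sum_(i < k) p i + \sum_(i < k) q i <= size S')%N &
        forall z, z \in S' ->
          rf_zero (rf_sub (diffQ p0 p q (c%:P, D)) (1, 'X + a%:P)) z].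
Proof.
move=> qp q0 s0 ns dbl.
set d := (p0 + \sum_(i < k) p i)%N; set q' := (\sum_(i < k) q i)%N.
have d0 : (1 <= d)%N.
  rewrite /d (leq_trans q0) // (leq_trans _ (leq_addl _ _)) //; exact: leq_sum.
pose Hall := c%:P ^+ p0 * \prod_(i < k) hs (p i) (q i).
pose B := D ^+ d * L ^+ q'.
have eQ : eqv (diffQ p0 p q (c%:P, D)) (Hall, B).
  have -> : B = D ^+ p0 * \prod_(i < k) (D ^+ p i * L ^+ q i).
    by rewrite big_split /= !prodrXr mulrA -exprD.
  apply: (eqv_mul (h1 := (c%:P ^+ p0, D ^+ p0))
    (h2 := (\prod_(i < k) hs (p i) (q i), \prod_(i < k) (D ^+ p i * L ^+ q i)))).
    by rewrite /eqv.
  apply: eqv_big => i; exact: (iter_eqv (qp i)).1.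
have B0 : B != 0 by rewrite mulf_neq0 ?expf_neq0 ?L0.
have HallS : forall z, z \in S -> Hall.[z] != 0.
  move=> z zS; rewrite hornerM -rmorphXn hornerC mulf_neq0 ?expf_neq0 //.
  rewrite horner_prod; apply/prodf_neq0 => i _; exact: hs_root.
have sHall : (size Hall <= q' * (size S).-1 + 1)%N.
  apply: leq_trans (size_mul_leq _ _) _.
  have h1 : (size (c%:P ^+ p0) <= 1)%N by rewrite -rmorphXn size_polyC_leq1.
  have h2 : (size (\prod_(i < k) hs (p i) (q i))%R <= q' * (size S).-1 + 1)%N.
    rewrite /q'; apply: (big_ind2 (fun (h : {poly F}) (e : nat) => size h <= e * (size S).-1 + 1)%N).
    - by rewrite size_poly1 mul0n.
    - move=> x1 x2 y1 y2 hx hy; apply: leq_trans (size_mul_leq _ _) _.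
      rewrite mulnDl; move: hx hy; move: (x2 * _)%N (y2 * _)%N => u v.
      rewrite -!subn1; lia.
    - move=> i _; exact: size_hs.
  move: h1 h2; move: (size _) (size _) => u v; rewrite -!subn1; lia.
have eSD : size D = ((size D).-1).+1 by rewrite prednK // lt0n size_poly_eq0.
have sB : size B = (d * (size D).-1 + q' * size S + 1)%N.
  rewrite size_mul ?expf_neq0 ?L0 //.
  have e1 := size_exp D d; have e2 := size_exp L q'.
  rewrite size_L /= in e2.
  rewrite -(prednK (_ : 0 < size (D ^+ d))%N) ?lt0n ?size_poly_eq0 ?expf_neq0 //.
  rewrite -(prednK (_ : 0 < size (L ^+ q'))%N) ?lt0n ?size_poly_eq0 ?expf_neq0 ?L0 //.
  by rewrite e1 e2 addSn addnS /= mulnC (mulnC (size S)) addn1.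
have BS : forall z, root B z -> z \in S.
  move=> z; rewrite rootM /root !horner_exp !expf_eq0 => /orP [/andP [_ h]|/andP [_ h]].
    by rewrite -rS.
  by move: h; rewrite -/(root L z) root_prod_XsubC.
have dB : D %| B by apply: dvdp_mulr; rewrite -{1}(expr1 D) dvdp_exp2l.
have Xa0 : 'X + a%:P != 0 by rewrite -size_poly_eq0 size_XaddC.
have eG := eqv_sub ('X + a%:P) eQ.
case: (boolP (- a \in S)) => aS; last first.
  pose A := Hall * ('X + a%:P).
  have [|||S' [uS' hS' cS']] := @core _ A B S uS BS.
  - move=> z /BS zS; rewrite hornerM mulf_neq0 ?HallS // !hornerE.
    by apply: contraNneq aS => /eqP; rewrite addr_eq0 => /eqP <-.
  - apply: leq_ltn_trans (size_mul_leq _ _) _; rewrite size_XaddC sB.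
    move: sHall ns d0 s0; move: (size Hall) (size S) (size D).-1 => u v w.
    case: v => // v; rewrite /= !addn2 => h1 h2 h3 _.
    have := @ar_fin0 d w v h3 h2; move: h1; rewrite mulnS; move: (q' * v)%N (d * w)%N => x y; lia.
  - rewrite sB; move: ns s0 d0; move: (size S) (size D).-1 => u v.
    case: u => // u h1 _ h2; have := @ar_fin0 d v u h2 h1; move: (d * v)%N => x; lia.
  exists S'; split => //.
    have sA : (size A <= q' * (size S).-1 + 2)%N.
      apply: leq_trans (size_mul_leq _ _) _; rewrite size_XaddC.
      move: sHall; move: (size Hall) => u; rewrite -!subn1; lia.
    apply: leq_trans cS'; exact: (ar_fin1 d0 s0 ns sA sB).
  move=> z zS'; have /andP [rz nBz] := hS' z zS'.
  exists (A - B), (B * ('X + a%:P)); split; [|split].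
  - by move: eG; rewrite /eqv /= !mul1r.
  - rewrite hornerM mulf_neq0 //; apply/negP => /eqP za.
    by move: rz nBz; rewrite /root /A hornerD hornerN (hornerM Hall) za mulr0 subr0 => ->.
  - by move: rz; rewrite /root -opprB hornerN oppr_eq0 => /eqP.
have rBa : root B (- a) by apply: root_dvdp dB _; rewrite rS.
have [B1 eB1] := factor_theorem _ _ rBa.
rewrite polyCN opprK in eB1.
have BS1 : forall z, root B1 z -> z \in S by move=> z r; apply: BS; rewrite eB1 rootM r.
have B10 : B1 != 0 by apply: contra_neq B0 => h; rewrite eB1 h mul0r.
have sB1 : size B1 = (d * (size D).-1 + q' * size S)%N.
  by move: sB; rewrite eB1 size_mul // size_XaddC addn2 addn1 => -[].
have [|||S' [uS' hS' cS']] := @core _ Hall B1 S uS BS1.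
- by move=> z /BS1; exact: HallS.
- rewrite sB1; move: sHall ns d0 s0; move: (size Hall) (size S) (size D).-1 => u v w.
  case: v => // v; rewrite /= => h1 h2 h3 _.
  have := @ar_fin0 d w v h3 h2; move: h1; rewrite mulnS; move: (q' * v)%N (d * w)%N => x y; lia.
- rewrite sB1; move: ns s0 d0; move: (size S) (size D).-1 => u v.
  case: u => // u h1 _ h2; have := @ar_fin0 d v u h2 h1; move: (d * v)%N => x; lia.
have rB1a : root B1 (- a).
  have h := dbl (- a) (etrans (rS _) aS).
  rewrite polyCN opprK in h.
  have := dvdp_trans h dB; rewrite eB1 expr2 dvdp_mul2r //.
  by rewrite root_factor_theorem polyCN opprK.
exists S'; split => //; first by apply: leq_trans cS'; exact: (ar_fin2 d0 s0 ns sHall sB1).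
move=> z zS'; have /andP [rz nBz] := hS' z zS'.
exists (Hall - B1), (B1 * ('X + a%:P)); split; [|split].
- move: eG; rewrite /eqv; move: (rf_sub (diffQ _ _ _ _) _) => G; rewrite /= eB1 => e.
  by apply: (mulIf Xa0); rewrite -mulrA e; ring.
- rewrite hornerM mulf_neq0 //; apply/negP => /eqP za.
  have ez : z = - a by apply/eqP; rewrite -addr_eq0; move: za; rewrite !hornerE => ->.
  by rewrite ez rB1a in nBz.
- by move: rz; rewrite /root -opprB hornerN oppr_eq0 => /eqP.
Qed.

End Ana.

Theorem lemma5 (R : realType) (k p0 : nat) (p q : 'I_k -> nat)
    (P D : {poly R[i]}) (a : R[i]) :
  (0 < k)%N ->
  (forall i, (q i <= p i)%N) ->
  (0 < \sum_(i < k) q i)%N ->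
  (* f = P / D in lowest terms *)
  D != 0 -> coprimep P D ->
  (* f is non-constant *)
  (forall c : R[i], P != c *: D) ->
  (* f(z) <> 0 for all z in C *)
  (forall z : R[i], ~~ root P z) ->
  (* all poles of f are multiple *)
  (forall z : R[i], root D z -> ('X - z%:P) ^+ 2 %| D) ->
  exists S : seq R[i],
    [/\ uniq S,
        (p0 + \sum_(i < k) p i + \sum_(i < k) q i <= size S)%N &
        forall z, z \in S ->
          rf_zero (rf_sub (diffQ p0 p q (P, D)) (1, 'X + a%:P)) z].
Proof.
move=> k0 qp q0 D0 cop ncst nroot dbl.
have sP1 : size P == 1.
  by apply: contraT => /closed_rootP [z rz]; move: (nroot z); rewrite rz.
case/size_poly1P: sP1 => c c0 Pc.
have [S [gD [uS rS eD dD dblS]]] := @rad_lemma _ D D0.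
case/dvdpP: dD => T eT.
have sD1 : size D != 1.
  apply/negP => /size_poly1P [e e0 De].
  have := ncst (c / e); rewrite Pc De -mul_polyC -polyCM divfK //.
  by rewrite eqxx.
have s0 : (0 < size S)%N.
  have [z rz] := closed_rootP _ sD1.
  by move: rz; rewrite rS; case: S {uS rS eD dblS}.
have gD0 : gD != 0 by apply: contra_neq D0 => h; rewrite eD h mul0r.
have sg : (size S < size gD)%N.
  apply: max_poly_roots => //; apply/allP => x xS.
  by apply: dblS => //; apply: dbl; rewrite rS.
have ns : (2 * size S <= (size D).-1)%N.
  rewrite eD size_rad //; move: sg s0; move: (size S) (size gD) => u v; rewrite -!subn1; lia.
rewrite Pc.
exact: (main_sec c0 D0 uS rS eD eT p0 a qp q0 s0 ns dbl).
Qed.
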